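(* Let $S$ be an $E$-solid locally inverse semigroup, $\rho$ an inverse semigroup congruence on $S$ whose idempotent classes are completely simple subsemigroups, $T=S/\rho$, and let $\mathcal C$ be the derived semigroupoid. Let $(\alpha,s,\beta)\in T\times S\times T$. (1) $(\alpha,s,\beta)$ is an arrow of $\mathcal C$ if and only if $\alpha\,\mathcal R\,\beta$ in $T$ and $s\rho\ge\alpha^{-1}\beta$. (2) If $(\alpha,s,\beta)$ is an arrow of $\mathcal C$ then $s\rho(s\rho)^{-1}\ge\alpha^{-1}\alpha$ and $(s\rho)^{-1}s\rho\ge\beta^{-1}\beta$ in $T$. (3) If $(\alpha,s,\beta)$ is an arrow of $\mathcal C$ then the following are equivalent: (a) $s\rho=\alpha^{-1}\beta$; (b) $s\rho(s\rho)^{-1}=\alpha^{-1}\alpha$; (c) $(s\rho)^{-1}s\rho=\beta^{-1}\beta$.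
   Context: The derived semigroupoid $\mathcal C$ has object set $T$ and, for $\alpha,\beta\in T$, arrow set $\mathcal C(\alpha,\beta)=\{(\alpha,s,\beta)\in T\times S\times T:\alpha\cdot s\rho=\beta,\ \beta\cdot(s\rho)^{-1}=\alpha\}$, with composition $(\alpha,s,\beta)\circ(\beta,t,\gamma)=(\alpha,st,\gamma)$. The order on $T$ is the natural partial order of the inverse semigroup $T$; $\mathcal R$ is Green's relation. Locally inverse: regular with every $eSe$ inverse; $E$-solid: idempotent-generated subsemigroup completely regular. *)

(* Defs.v *)
Definition associative {A : Type} (mul : A -> A -> A) : Prop :=
  forall x y z, mul x (mul y z) = mul (mul x y) z.

Definition idempotent {A : Type} (mul : A -> A -> A) (e : A) : Prop :=
  mul e e = e.

Definition is_inverse {A : Type} (mul : A -> A -> A) (a b : A) : Prop :=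
  mul (mul a b) a = a /\ mul (mul b a) b = b.

Definition inverse_semigroup {A : Type} (mul : A -> A -> A) (inv : A -> A) : Prop :=
  associative mul /\
  (forall a, is_inverse mul a (inv a)) /\
  (forall a b, is_inverse mul a b -> b = inv a).

Definition nat_le {A : Type} (mul : A -> A -> A) (a b : A) : Prop :=
  exists e, idempotent mul e /\ a = mul e b.

(** Green's relation R: a S^1 = b S^1. *)
Definition greenR {A : Type} (mul : A -> A -> A) (a b : A) : Prop :=
  (a = b \/ exists x, a = mul b x) /\ (b = a \/ exists y, b = mul a y).

Definition regular {A : Type} (mul : A -> A -> A) : Prop :=
  forall a, exists x, mul (mul a x) a = a.

Definition in_local {A : Type} (mul : A -> A -> A) (e a : A) : Prop :=
  exists s, a = mul (mul e s) e.

(** Locally inverse: regular and every eSe (e idempotent) is an inverse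
    semigroup, i.e. each element of eSe has a unique inverse within eSe. *)
Definition locally_inverse {A : Type} (mul : A -> A -> A) : Prop :=
  regular mul /\
  forall e, idempotent mul e ->
    forall a, in_local mul e a ->
      exists b, (in_local mul e b /\ is_inverse mul a b) /\
        forall b', in_local mul e b' -> is_inverse mul a b' -> b' = b.

Inductive in_genE {A : Type} (mul : A -> A -> A) : A -> Prop :=
  | genE_idem : forall e, idempotent mul e -> in_genE mul e
  | genE_mul : forall x y, in_genE mul x -> in_genE mul y -> in_genE mul (mul x y).

Definition completely_regular_sub {A : Type} (mul : A -> A -> A) (P : A -> Prop) : Prop :=
  forall a, P a -> exists x, P x /\ mul (mul a x) a = a /\ mul a x = mul x a.

Definition E_solid {A : Type} (mul : A -> A -> A) : Prop :=
  completely_regular_sub mul (in_genE mul).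

Definition subsemigroup {A : Type} (mul : A -> A -> A) (P : A -> Prop) : Prop :=
  forall x y, P x -> P y -> P (mul x y).

(** Completely simple subsemigroup (Howie): P is a subsemigroup which is simple
    (its only ideal is itself) and contains a primitive idempotent. *)
Definition ideal_of {A : Type} (mul : A -> A -> A) (P I : A -> Prop) : Prop :=
  (exists x, I x) /\ (forall x, I x -> P x) /\
  (forall x y, P x -> I y -> I (mul x y) /\ I (mul y x)).

Definition simple_sub {A : Type} (mul : A -> A -> A) (P : A -> Prop) : Prop :=
  forall I, ideal_of mul P I -> forall x, P x -> I x.

Definition primitive_idem_in {A : Type} (mul : A -> A -> A) (P : A -> Prop) (e : A) : Prop :=
  P e /\ idempotent mul e /\
  forall f, P f -> idempotent mul f -> mul e f = f -> mul f e = f -> f = e.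

Definition completely_simple_sub {A : Type} (mul : A -> A -> A) (P : A -> Prop) : Prop :=
  (exists x, P x) /\ subsemigroup mul P /\ simple_sub mul P /\
  exists e, primitive_idem_in mul P e.

Definition congruence {A : Type} (mul : A -> A -> A) (rho : A -> A -> Prop) : Prop :=
  (forall x, rho x x) /\ (forall x y, rho x y -> rho y x) /\
  (forall x y z, rho x y -> rho y z -> rho x z) /\
  (forall x y z, rho x y -> rho (mul z x) (mul z y) /\ rho (mul x z) (mul y z)).

(** The quotient S/rho is modelled by a surjective homomorphism [phi : S -> T]
    whose kernel is exactly rho; [phi s] plays the role of the class s rho. *)
Definition quotient_map {S T : Type} (mulS : S -> S -> S) (mulT : T -> T -> T)
  (rho : S -> S -> Prop) (phi : S -> T) : Prop :=
  (forall x y, phi (mulS x y) = mulT (phi x) (phi y)) /\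
  (forall t, exists s, phi s = t) /\
  (forall x y, phi x = phi y <-> rho x y).

Definition derived_arrow {S T : Type} (mulT : T -> T -> T) (invT : T -> T)
  (phi : S -> T) (alpha : T) (s : S) (beta : T) : Prop :=
  mulT alpha (phi s) = beta /\ mulT beta (invT (phi s)) = alpha.

(* Main.v *)
Require Import Defs.

Section Inv.
Variable A : Type.
Variable mul : A -> A -> A.
Variable inv : A -> A.
Hypothesis HT : inverse_semigroup mul inv.
Local Notation "x ** y" := (mul x y) (at level 40, left associativity).

Lemma aR x y z : (x ** y) ** z = x ** (y ** z).
Proof. destruct HT as [H _]. symmetry; apply H. Qed.

Lemma il a : a ** (inv a ** a) = a.
Proof. destruct HT as [_ [H _]]. rewrite <- aR. apply (H a). Qed.
Lemma ir a : inv a ** (a ** inv a) = inv a.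
Proof. destruct HT as [_ [H _]]. rewrite <- aR. apply (H a). Qed.
Lemma ilz a z : a ** (inv a ** (a ** z)) = a ** z.
Proof. rewrite <- (aR (inv a)), <- aR, il. reflexivity. Qed.
Lemma irz a z : inv a ** (a ** (inv a ** z)) = inv a ** z.
Proof. rewrite <- (aR a), <- aR, ir. reflexivity. Qed.
Lemma uq a b : (a ** b) ** a = a -> (b ** a) ** b = b -> b = inv a.
Proof. destruct HT as [_ [_ H]]. intros; apply H; split; auto. Qed.

Lemma inv_inv a : inv (inv a) = a.
Proof. symmetry; apply uq; rewrite aR; [apply ir | apply il]. Qed.

Lemma idem_inv e : e ** e = e -> inv e = e.
Proof. intro H; symmetry; apply uq; rewrite !H; auto. Qed.

Lemma idz e z : e ** e = e -> e ** (e ** z) = e ** z.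
Proof. intro H. rewrite <- aR, H. auto. Qed.

Lemma idem_mul e f : e ** e = e -> f ** f = f -> (e ** f) ** (e ** f) = e ** f.
Proof.
  intros He Hf.
  set (x := inv (e ** f)).
  assert (Hx : f ** (x ** e) = x).
  { apply uq; rewrite !aR.
    - rewrite (idz f), (idz e) by auto.
      pose proof (il (e ** f)) as H. rewrite !aR in H. exact H.
    - rewrite (idz e), (idz f) by auto.
      pose proof (irz (e ** f) e) as H. rewrite !aR in H. fold x in H.
      rewrite H. reflexivity. }
  assert (Hxx : x ** x = x).
  { transitivity ((f**(x**e))**(f**(x**e))); [rewrite Hx; reflexivity|].
    rewrite !aR.
    pose proof (irz (e ** f) e) as H. rewrite !aR in H. fold x in H.
    rewrite H. exact Hx. }
  assert (E : e ** f = x).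
  { rewrite <- (idem_inv x Hxx). unfold x. symmetry. apply inv_inv. }
  rewrite E. exact Hxx.
Qed.

Lemma idem_comm e f : e ** e = e -> f ** f = f -> e ** f = f ** e.
Proof.
  intros He Hf.
  pose proof (idem_mul e f He Hf) as H1.
  pose proof (idem_mul f e Hf He) as H2.
  rewrite <- (idem_inv (e ** f) H1).
  symmetry; apply uq; rewrite !aR.
  - rewrite (idz f), (idz e) by auto. rewrite !aR in H1. exact H1.
  - rewrite (idz e), (idz f) by auto. rewrite !aR in H2. exact H2.
Qed.

Lemma idem_aa a : (a ** inv a) ** (a ** inv a) = a ** inv a.
Proof. rewrite aR, ir. reflexivity. Qed.
Lemma idem_ia a : (inv a ** a) ** (inv a ** a) = inv a ** a.
Proof. rewrite aR, il. reflexivity. Qed.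

Lemma comm4 a b : (a ** inv a) ** (inv b ** b) = (inv b ** b) ** (a ** inv a).
Proof. apply idem_comm; [apply idem_aa | apply idem_ia]. Qed.

Lemma comm4z a b z : a ** (inv a ** (inv b ** (b ** z))) = inv b ** (b ** (a ** (inv a ** z))).
Proof.
  pose proof (f_equal (fun w => w ** z) (comm4 a b)) as H. simpl in H.
  rewrite !aR in H. exact H.
Qed.

Lemma inv_mul a b : inv (a ** b) = inv b ** inv a.
Proof.
  symmetry; apply uq; rewrite !aR.
  - rewrite comm4z, ilz, il. reflexivity.
  - rewrite <- comm4z, irz, ir. reflexivity.
Qed.

Lemma grR x y : greenR mul x y -> x ** (inv x ** y) = y.
Proof.
  intros [_ [E|[z Ez]]].
  - subst. apply il.
  - subst. apply ilz.
Qed.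
Lemma grL x y : greenR mul x y -> y ** (inv y ** x) = x.
Proof.
  intros [[E|[z Ez]] _].
  - subst. apply il.
  - subst. apply ilz.
Qed.

Lemma grLz x y z : greenR mul x y -> y ** (inv y ** (x ** z)) = x ** z.
Proof. intro H. rewrite <- aR, <- aR, (aR y), (grL _ _ H). reflexivity. Qed.

Lemma le_char x a e : e ** e = e -> x = e ** a -> x = (x ** inv x) ** a.
Proof.
  intros He Hx.
  rewrite Hx.
  rewrite (inv_mul ), (idem_inv e He), !aR.
  assert (C : forall z, a ** (inv a ** (e ** z)) = e ** (a ** (inv a ** z))).
  { intro z. pose proof (f_equal (fun w => w ** z) (idem_comm _ _ (idem_aa a) He)) as H.
    simpl in H. rewrite !aR in H. exact H. }
  rewrite C, (idz e) by exact He. rewrite il. reflexivity.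
Qed.

Lemma mainT (al : A) (a : A) (be : A) :
  ((al ** a = be /\ be ** inv a = al) <->
     greenR mul al be /\ nat_le mul (inv al ** be) a) /\
  ((al ** a = be /\ be ** inv a = al) ->
     nat_le mul (inv al ** al) (a ** inv a) /\
     nat_le mul (inv be ** be) (inv a ** a)) /\
  ((al ** a = be /\ be ** inv a = al) ->
     (a = inv al ** be <-> a ** inv a = inv al ** al) /\
     (a ** inv a = inv al ** al <-> inv a ** a = inv be ** be)).
Proof.
  split; [split|split].
  - intros [H1 H2]. split.
    + split; right; [exists (inv a) | exists a]; auto.
    + exists (inv al ** al). split; [apply idem_ia|].
      rewrite <- H1, aR. reflexivity.
  - intros [HR [e [He Hx]]].
    pose proof (le_char _ _ _ He Hx) as Hx'.
    rewrite (inv_mul ), (inv_inv ), !aR, (grLz _ _ _ HR) in Hx'.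
    (* Hx' : inv al ** be = inv al ** (al ** a) *)
    assert (E1 : al ** a = be).
    { rewrite <- (grR _ _ HR), Hx', ilz. reflexivity. }
    split; [exact E1|].
    assert (E2 : al = al ** (a ** inv a)).
    { assert (E3 : inv be ** al = inv (inv al ** be)).
      { rewrite inv_mul, inv_inv. reflexivity. }
      rewrite Hx', !inv_mul, inv_inv, aR in E3.
      pose proof (comm4 a al) as C. rewrite !aR in C.
      transitivity (be ** (inv be ** al)); [symmetry; apply grL; exact HR|].
      rewrite E3, <- E1, !aR, C, ilz. reflexivity. }
    rewrite <- E1, aR, <- E2. reflexivity.
  - intros [H1 H2]. split.
    + exists (inv al ** al). split; [apply idem_ia|].
      rewrite !aR, <- (aR al a), H1, H2. reflexivity.
    + exists (inv be ** be). split; [apply idem_ia|].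
      rewrite !aR, <- (aR be (inv a)), H2, H1. reflexivity.
  - intros [H1 H2].
    assert (HR : greenR mul al be).
    { split; right; [exists (inv a) | exists a]; auto. }
    assert (AB : a = inv al ** be <-> a ** inv a = inv al ** al).
    { split.
      - intro Ea. rewrite Ea, inv_mul, inv_inv, !aR, (grL _ _ HR). reflexivity.
      - intro Eb. transitivity (a ** inv a ** a); [symmetry; rewrite aR; apply il|].
        rewrite Eb, aR, H1. reflexivity. }
    split; [exact AB|].
    split.
    + intro Eb. apply AB in Eb. rewrite Eb, inv_mul, inv_inv, !aR, (grR _ _ HR).
      reflexivity.
    + intro Ec. apply AB.
      rewrite <- H2, inv_mul, inv_inv, aR, <- Ec, il. reflexivity.
Qed.
End Inv.

Theorem lemma5p1
  (S : Type) (mulS : S -> S -> S)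
  (T : Type) (mulT : T -> T -> T) (invT : T -> T)
  (rho : S -> S -> Prop) (phi : S -> T)
  (HS_assoc : associative mulS)
  (HS_li : locally_inverse mulS)
  (HS_Es : E_solid mulS)
  (Hrho : congruence mulS rho)
  (HT : inverse_semigroup mulT invT)
  (Hphi : quotient_map mulS mulT rho phi)
  (Hcs : forall e : T, idempotent mulT e ->
           completely_simple_sub mulS (fun x => phi x = e))
  (alpha : T) (s : S) (beta : T) :
  (derived_arrow mulT invT phi alpha s beta <->
     greenR mulT alpha beta /\ nat_le mulT (mulT (invT alpha) beta) (phi s)) /\
  (derived_arrow mulT invT phi alpha s beta ->
     nat_le mulT (mulT (invT alpha) alpha) (mulT (phi s) (invT (phi s))) /\
     nat_le mulT (mulT (invT beta) beta) (mulT (invT (phi s)) (phi s))) /\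
  (derived_arrow mulT invT phi alpha s beta ->
     (phi s = mulT (invT alpha) beta <->
        mulT (phi s) (invT (phi s)) = mulT (invT alpha) alpha) /\
     (mulT (phi s) (invT (phi s)) = mulT (invT alpha) alpha <->
        mulT (invT (phi s)) (phi s) = mulT (invT beta) beta)).
Proof.
  unfold derived_arrow.
  exact (mainT T mulT invT HT alpha (phi s) beta).
Qed.
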